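(* Let $n\geq 2$ be an integer and let $CCC(n)$ be the crystal cubic carbon graph with $n$ layers. Then the minimum cardinality of a doubly resolving set of $CCC(n)$ is $\psi(CCC(n))=24\times 7^{n-2}$.
   Context: All graphs are simple and connected; $d(u,v)$ is the shortest-path distance. For an ordered set $Z=\{z_1,\dots,z_m\}$ of vertices, $r(u\,|\,Z)=(d(u,z_1),\dots,d(u,z_m))$. $Z$ is a doubly resolving set of $G$ if for every two distinct vertices $u,v$ of $G$, $r(u|Z)-r(v|Z)\neq \mu(1,\dots,1)$ for every integer $\mu$; $\psi(G)$ denotes the minimum size of a doubly resolving set. The cube $C_4\Box P_2$ is the graph on $\{1,\dots,8\}$ with edges $12,23,34,14,56,67,78,58$ and $15,26,37,48$. The crystal cubic carbon $CCC(n)$ is constructed as follows. Its vertex set is partitioned into layers $L_1,\dots,L_n$. Layer $L_1$ is a copy of $C_4\Box P_2$ with vertices $1,\dots,8$. For $2\leq k\leq n$, layer $L_k$ consists of $8\times 7^{k-2}$ vertex-disjoint copies of $C_4\Box P_2$ (called cubes), each cube having a distinguished vertex (the vertex labelled $1$ in its copy) called its head vertex. Each vertex $r\in L_1$ is joined by an edge to the head vertex of exactly one cube of $L_2$ (distinct vertices of $L_1$ to distinct cubes). For $2\leq k<n$, each of the $7$ non-head vertices of each cube of $L_k$ is joined by an edge to the head vertex of exactly one cube of $L_{k+1}$, in such a way that every cube of $L_{k+1}$ has its head joined to exactly one such vertex. There are no other edges. Thus $CCC(n)$ has $8+64\sum_{k=2}^{n}7^{k-2}$ vertices. *)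

(* Defs.v *)
From mathcomp Require Import all_boot all_order all_algebra.
Set Implicit Arguments. Unset Strict Implicit. Unset Printing Implicit Defensive.

Definition reach (T : finType) (e : rel T) (u : T) (k : nat) : {set T} :=
  iter k (fun S => S :|: [set y | [exists x in S, e x y]]) [set u].

(* shortest-path distance: least k with v reachable from u in <= k steps
   (for a connected graph such k is < #|T|) *)
Definition dist (T : finType) (e : rel T) (u v : T) : nat :=
  find (fun k => v \in reach e u k) (iota 0 #|T|).

Definition doubly_resolving (T : finType) (e : rel T) (Z : {set T}) : Prop :=
  forall u v : T, u != v ->
    ~ (exists mu : int, forall z, z \in Z ->
         ((dist e u z)%:Z - (dist e v z)%:Z = mu)%R).

Definition psi_is (T : finType) (e : rel T) (k : nat) : Prop :=
  (exists Z : {set T}, doubly_resolving e Z /\ #|Z| = k) /\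
  (forall Z : {set T}, doubly_resolving e Z -> k <= #|Z|).

(* ---------- the cube C4 [] P2, vertices 1..8 encoded as 0..7 ---------- *)
Definition cube_edges : seq (nat * nat) :=
  [:: (0,1); (1,2); (2,3); (0,3); (4,5); (5,6); (6,7); (4,7);
      (0,4); (1,5); (2,6); (3,7)].

Definition cube_adj (p q : 'I_8) : bool :=
  (((p : nat), (q : nat)) \in cube_edges) || (((q : nat), (p : nat)) \in cube_edges).

(* ---------- crystal cubic carbon CCC(n) ----------
   A cube is identified by an address s : seq 'I_8:
     - [::] is the cube of layer L1;
     - [:: r] is the cube of L2 attached to vertex r of L1;
     - rcons s p (p non-head, i.e. p != 0) is the cube of L_{k+1} attached
       to vertex p of the cube s of L_k (k >= 2).
   So cubes of layer L_k have addresses of length k-1 <= n-1, all of whose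
   entries except the first are nonzero.  A vertex is (address, position),
   position 0 being the head vertex (label 1). *)
Definition ccc_pre (n : nat) := ({k : 'I_n & k.-tuple 'I_8} * 'I_8)%type.

Definition ccc_addr_pre n (x : ccc_pre n) : seq 'I_8 := tagged x.1.

Definition ccc_valid n : pred (ccc_pre n) :=
  fun x => all (fun i => i != ord0) (behead (ccc_addr_pre x)).

Definition CCC (n : nat) : finType := {x : ccc_pre n | ccc_valid x}.

Definition ccc_addr n (v : CCC n) : seq 'I_8 := ccc_addr_pre (val v).
Definition ccc_pos n (v : CCC n) : 'I_8 := (val v).2.

Definition ccc_adj (n : nat) : rel (CCC n) := fun u v =>
  [|| (ccc_addr u == ccc_addr v) && cube_adj (ccc_pos u) (ccc_pos v),
      (ccc_addr v == rcons (ccc_addr u) (ccc_pos u)) && (ccc_pos v == ord0)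
    | (ccc_addr u == rcons (ccc_addr v) (ccc_pos v)) && (ccc_pos u == ord0)].

(* Main.v *)
Require Import Defs.
From mathcomp Require Import all_boot all_order all_algebra.
From mathcomp Require Import zify.
Set Implicit Arguments. Unset Strict Implicit. Unset Printing Implicit Defensive.

Section Generic.
Variable T : finType.
Variable e : rel T.
Hypothesis esym : symmetric e.

Lemma reachS u k y : (y \in reach e u k.+1) =
  (y \in reach e u k) || [exists x in reach e u k, e x y].
Proof. by rewrite /reach iterS !inE. Qed.

Lemma reach0 u y : (y \in reach e u 0) = (y == u).
Proof. by rewrite /reach /= inE. Qed.

Lemma reach_mono u k k' y : k <= k' -> y \in reach e u k -> y \in reach e u k'.
Proof.
move=> /subnKC <-; elim: (k' - k) => [|m IH]; first by rewrite addn0.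
by move=> H; rewrite addnS reachS IH.
Qed.

Lemma reach_trans u x y j k :
  x \in reach e u j -> y \in reach e x k -> y \in reach e u (j + k).
Proof.
move=> Hx; elim: k y => [|k IH] y; first by rewrite reach0 addn0 => /eqP ->.
rewrite reachS addnS => /orP [/IH H|/existsP [w /andP [/IH Hw ew]]].
  by rewrite reachS H.
by rewrite reachS; apply/orP; right; apply/existsP; exists w; rewrite Hw.
Qed.

Lemma reach_edge x y : e x y -> y \in reach e x 1.
Proof.
move=> H; rewrite reachS; apply/orP; right; apply/existsP; exists x.
by rewrite reach0 eqxx.
Qed.

Lemma reach_sym u y k : y \in reach e u k -> u \in reach e y k.
Proof.
elim: k y => [|k IH] y; first by rewrite !reach0 eq_sym.
rewrite reachS => /orP [/IH H|/existsP [x /andP [/IH Hx exy]]].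
  exact: (reach_mono (leqnSn k)).
have Hyx : x \in reach e y 1 by apply: reach_edge; rewrite esym.
by have := reach_trans Hyx Hx; rewrite add1n.
Qed.

Lemma reach_sub u k : reach e u k \subset reach e u k.+1.
Proof. by apply/subsetP => y; apply: reach_mono. Qed.

Definition nxt (S : {set T}) : {set T} := S :|: [set y | [exists x in S, e x y]].
Lemma reach_succ u k : reach e u k.+1 = nxt (reach e u k).
Proof. by []. Qed.

Lemma reach_fix u k : reach e u k.+1 = reach e u k ->
  forall m, reach e u (k + m) = reach e u k.
Proof.
move=> H; elim=> [|m IH]; first by rewrite addn0.
by rewrite addnS reach_succ IH -reach_succ H.
Qed.

Lemma reach_grow u k : reach e u k.+1 = reach e u k \/ k < #|reach e u k|.
Proof.
elim: k => [|k IH].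
  by right; rewrite /reach /= cards1.
case: IH => [H|H].
  left; have := reach_fix H 2; rewrite addn2 => ->; by rewrite H.
case: (boolP (reach e u k.+2 == reach e u k.+1)) => [/eqP ->|Hne]; first by left.
right.
have Hp : reach e u k \proper reach e u k.+1.
  rewrite properEneq reach_sub andbT; apply/negP => /eqP E.
  by move: Hne; rewrite (reach_succ u k.+1) -E -reach_succ E eqxx.
exact: (leq_ltn_trans H (proper_card Hp)).
Qed.

Lemma reach_bound u k y : y \in reach e u k -> y \in reach e u #|T|.-1.
Proof.
have Hfix : reach e u (#|T|.-1).+1 = reach e u #|T|.-1.
  case: (reach_grow u #|T|.-1) => // H.
  have HT : 0 < #|T| by apply/card_gt0P; exists u.
  have Hc : #|reach e u #|T|.-1| = #|T|.
    by apply/eqP; rewrite eqn_leq max_card /=; move: H HT; case: #|T|.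
  have Es : reach e u #|T|.-1 = [set: T].
    by apply/eqP; rewrite eqEcard subsetT cardsT Hc /=.
  apply/eqP; rewrite eqEsubset reach_sub andbT Es; exact: subsetT.
case: (leqP k #|T|.-1) => [Hk|Hk] Hy; first exact: reach_mono Hy.
by move: Hy; rewrite -(subnKC (ltnW Hk)) (reach_fix Hfix).
Qed.

Hypothesis conn : forall u v, exists k, v \in reach e u k.


Lemma dist_reach u v : v \in reach e u (dist e u v).
Proof.
have [k Hk] := conn u v.
have HT : 0 < #|T| by apply/card_gt0P; exists u.
have Hb := reach_bound Hk.
have Hh : has (fun k => v \in reach e u k) (iota 0 #|T|).
  apply/hasP; exists #|T|.-1 => //; rewrite mem_iota /= add0n.
  by rewrite prednK // leqnn.
have := nth_find 0 Hh; rewrite nth_iota ?add0n //.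
by move: Hh; rewrite has_find size_iota.
Qed.

Lemma dist_le u v k : v \in reach e u k -> dist e u v <= k.
Proof.
move=> Hk; rewrite leqNgt; apply/negP => Hlt.
have Hs : find (fun k => v \in reach e u k) (iota 0 #|T|) <= #|T|.
  by have := find_size (fun k => v \in reach e u k) (iota 0 #|T|); rewrite size_iota.
have := before_find 0 Hlt; rewrite nth_iota ?add0n ?Hk //.
by apply: leq_trans Hlt Hs.
Qed.

Lemma distP u v k : (v \in reach e u k) = (dist e u v <= k).
Proof.
apply/idP/idP; first exact: dist_le.
by move=> H; apply: reach_mono H (dist_reach u v).
Qed.

Lemma dist_self u : dist e u u = 0.
Proof. by apply/eqP; rewrite -leqn0 -distP reach0. Qed.

Lemma dist0 u v : dist e u v = 0 -> u = v.
Proof. by move=> H; have := dist_reach u v; rewrite H reach0 => /eqP. Qed.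

Lemma dist_sym u v : dist e u v = dist e v u.
Proof.
apply/eqP; rewrite eqn_leq.
by apply/andP; split; rewrite -distP; apply: reach_sym; apply: dist_reach.
Qed.

Lemma dist_tri u v w : dist e u w <= dist e u v + dist e v w.
Proof. apply: dist_le; exact: reach_trans (dist_reach u v) (dist_reach v w). Qed.

Lemma dist_edge x y : e x y -> dist e x y <= 1.
Proof. by move=> H; apply: dist_le; apply: reach_edge. Qed.

Lemma dist_lip u x y : e x y -> dist e u y <= dist e u x + 1.
Proof. move=> H; exact: leq_trans (dist_tri u x y) (leq_add (leqnn _) (dist_edge H)). Qed.

Lemma lip_bound (f : T -> nat) :
  (forall x y, e x y -> f y <= f x + 1) ->
  forall u v, f v <= f u + dist e u v.
Proof.
move=> Hf u v.
suff H : forall k y, y \in reach e u k -> f y <= f u + k by apply: H (dist_reach u v).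
elim=> [|k IH] y; first by rewrite reach0 addn0 => /eqP ->.
rewrite reachS => /orP [/IH H|/existsP [x /andP [/IH Hx exy]]].
  by rewrite addnS ltnW // ltnS.
by apply: leq_trans (Hf _ _ exy) _; rewrite addn1 addnS ltnS.
Qed.

Lemma dist_pred u v : u != v -> exists x, e x v /\ (dist e u x).+1 = dist e u v.
Proof.
move=> Huv.
have := dist_reach u v.
case Hd : (dist e u v) => [|k].
  by move: (dist0 Hd) Huv => ->; rewrite eqxx.
rewrite reachS => /orP [|/existsP [x /andP [Hx exy]]].
  by rewrite distP Hd ltnn.
exists x; split => //; apply/eqP; rewrite eqn_leq; apply/andP; split.
  by rewrite ltnS -distP.
by rewrite -Hd -addn1; apply: dist_lip.
Qed.

Lemma cut_lemma (A : {set T}) w :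
  w \in A -> (forall x y, x \in A -> y \notin A -> e x y -> x = w) ->
  forall x y, x \in A -> y \notin A -> dist e x y = dist e x w + dist e w y.
Proof.
move=> Hw HA x y Hx Hy; apply/eqP; rewrite eqn_leq dist_tri /=.
pose f z := if z \in A then dist e x z else dist e x w + dist e w z.
have Hf : forall a b, e a b -> f b <= f a + 1.
  move=> a b eab; rewrite /f.
  case: (boolP (a \in A)) => Ha; case: (boolP (b \in A)) => Hb.
  - exact: dist_lip.
  - move: (HA _ _ Ha Hb eab) => Ea; subst a.
    by rewrite leq_add2l dist_edge.
  - have eba : e b a by rewrite esym.
    move: (HA _ _ Hb Ha eba) => Eb; subst b.
    by rewrite -addnA leq_addr.
  - by rewrite -addnA leq_add2l dist_lip.
have := lip_bound Hf x y.
by rewrite /f Hx (negbTE Hy) dist_self.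
Qed.

End Generic.


Definition code (a : 'I_8) : nat := nth 0 [:: 0; 1; 3; 2; 4; 5; 7; 6] a.
Definition ham (a b : 'I_8) : nat :=
  (odd (code a) != odd (code b)) + (odd (code a)./2 != odd (code b)./2)
  + (odd (code a)./2./2 != odd (code b)./2./2).


Definition mk8 (m : nat) : 'I_8 := Ordinal (ltn_pmod m (isT : 0 < 8)).
Definition E8 := map mk8 (iota 0 8).
Lemma mem_E8 x : x \in E8.
Proof.
have -> : x = mk8 x by apply: val_inj; rewrite /= modn_small.
by apply: map_f; rewrite mem_iota /=.
Qed.
Lemma E8P (P : pred 'I_8) : all P E8 -> forall x, P x.
Proof. by move=> /allP H x; apply: H; rewrite mem_E8. Qed.
Lemma E8P2 (P : 'I_8 -> 'I_8 -> bool) : all (fun p => all (fun q => P p q) E8) E8 -> forall p q, P p q.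
Proof. move=> H p; apply: (@E8P (fun q => P p q)); exact: (E8P H p). Qed.
Lemma E8P3 (P : 'I_8 -> 'I_8 -> 'I_8 -> bool) :
  all (fun a => all (fun p => all (fun q => P a p q) E8) E8) E8 -> forall a p q, P a p q.
Proof. move=> H a; apply: (@E8P2 (fun p q => P a p q)); exact: (E8P H a). Qed.
Lemma E8P' (P : pred 'I_8) : has P E8 -> exists x, P x.
Proof. by move=> /hasP [x _ H]; exists x. Qed.

Lemma ham_adj_b : all (fun p => all (fun q => cube_adj p q == (ham p q == 1)) E8) E8.
Proof. by vm_compute. Qed.
Lemma ham_sym_b : all (fun p => all (fun q => ham p q == ham q p) E8) E8.
Proof. by vm_compute. Qed.
Lemma ham_self_b : all (fun p => ham p p == 0) E8.
Proof. by vm_compute. Qed.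
Lemma ham_lip_b : all (fun a => all (fun p => all (fun q => cube_adj p q ==> (ham a q <= ham a p + 1)) E8) E8) E8.
Proof. by vm_compute. Qed.
Lemma ham_pred_b : all (fun a => all (fun b => (a != b) ==> has (fun q => cube_adj q b && ((ham a q).+1 == ham a b)) E8) E8) E8.
Proof. by vm_compute. Qed.
Definition i1 : 'I_8 := mk8 1.
Definition i3 : 'I_8 := mk8 3.
Definition i4 : 'I_8 := mk8 4.
Lemma F5_b : all (fun a => all (fun b => 
  [&& ham a i1 + ham b ord0 == ham b i1 + ham a ord0,
      ham a i3 + ham b ord0 == ham b i3 + ham a ord0 &
      ham a i4 + ham b ord0 == ham b i4 + ham a ord0] ==> (a == b)) E8) E8.
Proof. by vm_compute. Qed.
Lemma F6_b : all (fun a =>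
  [&& ham a ord0 + ham ord0 i1 <= ham a i1, ham a ord0 + ham ord0 i3 <= ham a i3 &
      ham a ord0 + ham ord0 i4 <= ham a i4] ==> (a == ord0)) E8.
Proof. by vm_compute. Qed.
Lemma F4_b : all (fun x1 => all (fun x2 => has (fun a => has (fun b => (a != b) &&
   all (fun x => ham a x + ham b ord0 == ham b x + ham a ord0) [:: x1; x2]) E8) E8) E8) E8.
Proof. by vm_compute. Qed.


Definition valid (s : seq 'I_8) := all (fun i => i != ord0) (behead s).

Section Model.
Variable n : nat.

Lemma addr_size (u : CCC n) : size (ccc_addr u) < n.
Proof. by case: u => [[[k t] p] V]; rewrite /ccc_addr /ccc_addr_pre /= size_tuple. Qed.

Lemma addr_valid (u : CCC n) : valid (ccc_addr u).
Proof. by case: u => [[[k t] p] V]. Qed.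

Definition mkpre (s : seq 'I_8) (H : size s < n) (p : 'I_8) : ccc_pre n :=
  (Tagged (fun k : 'I_n => k.-tuple 'I_8) (in_tuple s : (Ordinal H).-tuple 'I_8), p).

Definition mkv (s : seq 'I_8) (H : size s < n) (V : valid s) (p : 'I_8) : CCC n :=
  @exist _ (@ccc_valid n) (mkpre H p) V.

Lemma mkv_addr s H V p : ccc_addr (@mkv s H V p) = s.
Proof. by []. Qed.
Lemma mkv_pos s H V p : ccc_pos (@mkv s H V p) = p.
Proof. by []. Qed.

Lemma ccc_inj (u v : CCC n) : ccc_addr u = ccc_addr v -> ccc_pos u = ccc_pos v -> u = v.
Proof.
case: u => [[[k t] p] V]; case: v => [[[k' t'] p'] V'].
rewrite /ccc_addr /ccc_pos /ccc_addr_pre /= => Et Ep; subst p'.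
have Ek : k = k'.
  by apply: val_inj; rewrite /= -(size_tuple t) -(size_tuple t') Et.
subst k'.
have Et' : t = t' by apply: val_inj.
subst t'.
by rewrite (bool_irrelevance V V').
Qed.

End Model.

Lemma ham_adj p q : cube_adj p q = (ham p q == 1).
Proof. by apply/eqP; apply: (E8P2 ham_adj_b). Qed.
Lemma ham_sym p q : ham p q = ham q p.
Proof. by apply/eqP; apply: (E8P2 ham_sym_b). Qed.
Lemma ham_self p : ham p p = 0.
Proof. by move: (E8P ham_self_b p) => /eqP. Qed.
Lemma ham_lip a p q : cube_adj p q -> ham a q <= ham a p + 1.
Proof. by apply/implyP; apply: (E8P3 ham_lip_b). Qed.
Lemma ham_pred a b : a != b -> exists q, cube_adj q b /\ (ham a q).+1 = ham a b.
Proof.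
move: (E8P2 ham_pred_b a b) => /implyP H /H /hasP [q _ /andP [H1 /eqP H2]].
by exists q.
Qed.
Lemma ham0 a b : ham a b = 0 -> a = b.
Proof.
move=> H; apply/eqP; apply/negP => /negP Hne.
by have [q [_ H2]] := ham_pred Hne; rewrite H in H2.
Qed.
Lemma cube_adj_sym p q : cube_adj p q = cube_adj q p.
Proof. by rewrite !ham_adj ham_sym. Qed.
Lemma F5 a b :
  ham a i1 + ham b ord0 = ham b i1 + ham a ord0 ->
  ham a i3 + ham b ord0 = ham b i3 + ham a ord0 ->
  ham a i4 + ham b ord0 = ham b i4 + ham a ord0 -> a = b.
Proof.
move=> H1 H2 H3; move: (E8P2 F5_b a b) => /implyP H.
by apply/eqP; apply: H; rewrite H1 H2 H3 !eqxx.
Qed.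
Lemma F6 a :
  ham a ord0 + ham ord0 i1 <= ham a i1 ->
  ham a ord0 + ham ord0 i3 <= ham a i3 ->
  ham a ord0 + ham ord0 i4 <= ham a i4 -> a = ord0.
Proof.
move=> H1 H2 H3; move: (E8P F6_b a) => /implyP H.
by apply/eqP; apply: H; rewrite H1 H2 H3.
Qed.
Lemma F4 x1 x2 : exists a b, a != b /\
  ham a x1 + ham b ord0 = ham b x1 + ham a ord0 /\
  ham a x2 + ham b ord0 = ham b x2 + ham a ord0.
Proof.
move: (E8P2 F4_b x1 x2) => /hasP [a _] /hasP [b _] /andP [Hab] /=.
by rewrite andbT => /andP [/eqP H1 /eqP H2]; exists a, b.
Qed.
Lemma i1_neq0 : i1 != ord0. Proof. by []. Qed.
Lemma i3_neq0 : i3 != ord0. Proof. by []. Qed.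
Lemma i4_neq0 : i4 != ord0. Proof. by []. Qed.



Section CCCgraph.
Variable n : nat.
Hypothesis hn : 1 < n.

Local Notation V := (CCC n).
Local Notation e := (@ccc_adj n).
Local Notation addr := (@ccc_addr n).
Local Notation pos := (@ccc_pos n).
Local Notation D := (dist e).

Lemma e_sym : symmetric e.
Proof.
move=> x y; rewrite /ccc_adj cube_adj_sym (eq_sym (addr x)).
by case: (_ && _); case: (_ && _); case: (_ && _).
Qed.

Lemma e_flip x y : e x y -> e y x.
Proof. by rewrite e_sym. Qed.

Lemma adjE x y : e x y ->
  [\/ addr x = addr y /\ cube_adj (pos x) (pos y),
      addr y = rcons (addr x) (pos x) /\ pos y = ord0 |
      addr x = rcons (addr y) (pos y) /\ pos x = ord0].
Proof.
rewrite /ccc_adj => /or3P [/andP [/eqP H1 H2]|/andP [/eqP H1 /eqP H2]|/andP [/eqP H1 /eqP H2]].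
- by apply: Or31.
- by apply: Or32.
- by apply: Or33.
Qed.

Lemma valid_rcons s q : valid (rcons s q) -> valid s.
Proof.
rewrite /valid; case: s => [|x s] //=.
by rewrite all_rcons => /andP [].
Qed.

Lemma valid_rcons' s q : valid s -> (s = [::] \/ q != ord0) -> valid (rcons s q).
Proof.
rewrite /valid; case: s => [|x s] //= Hs [//|Hq].
by rewrite all_rcons Hq.
Qed.

Lemma exV s p : size s < n -> valid s -> exists z : V, addr z = s /\ pos z = p.
Proof. by move=> H1 H2; exists (mkv H1 H2 p). Qed.

Definition hd (u : V) : V := mkv (addr_size u) (addr_valid u) ord0.
Lemma hd_addr u : addr (hd u) = addr u. Proof. by []. Qed.
Lemma hd_pos u : pos (hd u) = ord0. Proof. by []. Qed.

Lemma cube_reach (u v : V) : addr u = addr v -> v \in reach e u (ham (pos u) (pos v)).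
Proof.
move=> Ha.
suff H : forall k (v : V), addr v = addr u -> ham (pos u) (pos v) = k -> v \in reach e u k.
  by apply: H.
elim=> [|k IH] w Hw Hk.
  by rewrite reach0; apply/eqP; apply: ccc_inj; [exact: Hw | symmetry; exact: ham0 Hk].
have Hne : pos u != pos w by apply/negP => /eqP E; rewrite E ham_self in Hk.
have [q [Hq1 Hq2]] := ham_pred Hne.
have [x [Hx1 Hx2]] := exV q (addr_size u) (addr_valid u).
have Hxr : x \in reach e u k by apply: IH => //; rewrite Hx2; apply/eqP; rewrite -eqSS Hq2 Hk.
rewrite reachS; apply/orP; right; apply/existsP; exists x; rewrite Hxr /=.
by rewrite /ccc_adj Hx1 Hw eqxx Hx2 Hq1.
Qed.

Lemma conn_root (u : V) : exists k, (hd u) \in reach e u k /\ True.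
Proof. by exists (ham (pos u) ord0); split => //; apply: cube_reach. Qed.

Lemma conn : forall u v : V, exists k, v \in reach e u k.
Proof.
have H0 : 0 < n by apply: ltnW.
have Hv : valid [::] by [].
pose r := mkv (H0 : size [::] < n) Hv ord0.
suff Hr : forall u : V, exists k, r \in reach e u k.
  move=> u v; have [k1 H1] := Hr u; have [k2 H2] := Hr v.
  exists (k1 + k2); apply: reach_trans H1 _.
  have := reach_sym e_sym H2. exact.
suff Hr : forall m (u : V), size (addr u) = m -> exists k, r \in reach e u k.
  by move=> u; apply: (Hr _ u).
elim=> [|m IH] u Hu.
  exists (ham (pos u) ord0).
  have -> : r = hd u by apply: ccc_inj => //=; rewrite hd_addr; case: (addr u) Hu.
  by apply: cube_reach.
case/lastP E : (addr u) Hu => [//|s q]; rewrite size_rcons => /eqP; rewrite eqSS => /eqP Hs.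
have Hsn : size s < n by apply: leq_ltn_trans (addr_size u); rewrite E size_rcons.
have Hsv : valid s by apply: (@valid_rcons s q); rewrite -E addr_valid.
pose w := mkv Hsn Hsv q.
have [k Hk] := IH w Hs.
exists (ham (pos u) ord0 + 1 + k).
apply: reach_trans Hk.
apply: reach_trans (cube_reach (v := hd u) _) _ => //.
apply: reach_edge; rewrite /ccc_adj; apply/or3P; apply: Or33.
by rewrite hd_addr E /= eqxx.
Qed.


Lemma Dsym u v : D u v = D v u. Proof. exact: dist_sym e_sym conn u v. Qed.
Lemma Dtri u v w : D u w <= D u v + D v w. Proof. exact: (dist_tri conn u v w). Qed.
Lemma Dself u : D u u = 0. Proof. exact: (dist_self conn u). Qed.
Lemma D0 u v : D u v = 0 -> u = v. Proof. exact: (dist0 conn). Qed.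
Lemma Dle u v k : v \in reach e u k -> D u v <= k. Proof. exact: dist_le. Qed.

Definition leaf (u : V) := size (addr u) == n.-1.

Lemma leaf_norcons (u x : V) q : leaf u -> addr x <> rcons (addr u) q.
Proof.
move=> /eqP Hu Ex; have := addr_size x; rewrite Ex size_rcons Hu.
by rewrite prednK ?ltnn // ltnW.
Qed.

Lemma L1 u v : addr u = addr v -> leaf u -> D u v = ham (pos u) (pos v).
Proof.
move=> Ha Hl; apply/eqP; rewrite eqn_leq Dle ?cube_reach //=.
pose f (y : V) := if addr y == addr u then ham (pos u) (pos y) else ham (pos u) ord0 + 1.
have Hf : forall x y, e x y -> f y <= f x + 1.
  have Hsz : forall (z : V) q, addr z <> rcons (addr u) q.
    by move=> z q; apply: leaf_norcons.
  move=> x y /adjE [[H1 H2]|[H1 H2]|[H1 H2]]; rewrite /f.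
  - rewrite H1; case: ifP => _; [exact: (ham_lip (pos u) H2) | by rewrite leq_addr].
  - case: ifP => Hy; case: ifP => Hx.
    + by move: H1; rewrite (eqP Hx) => /Hsz.
    + by rewrite H2 -addnA leq_addr.
    + by move: H1; rewrite (eqP Hx) => /Hsz.
    + by rewrite leq_addr.
  - case: ifP => Hy; case: ifP => Hx.
    + by move: H1; rewrite (eqP Hy) => /Hsz.
    + by move: H1; rewrite (eqP Hy) => /Hsz.
    + by rewrite H2.
    + by rewrite leq_addr.
have := lip_bound conn Hf u v.
by rewrite /f Ha eqxx ham_self add0n.
Qed.

Lemma L2 u w : leaf u -> addr w != addr u -> D u w = ham (pos u) ord0 + D (hd u) w.
Proof.
move=> Hl Hw.
have HwA : hd u \in [set y | addr y == addr u] by rewrite inE hd_addr.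
have HA : forall x y, x \in [set y | addr y == addr u] -> y \notin [set y | addr y == addr u] ->
    e x y -> x = hd u.
  move=> x y; rewrite !inE => /eqP Hx Hy /adjE [[H1 H2]|[H1 H2]|[H1 H2]].
  + by move: Hy; rewrite -H1 Hx eqxx.
  + by exfalso; apply: (@leaf_norcons u y (pos x) Hl); rewrite H1 Hx.
  + by apply: ccc_inj; rewrite ?hd_addr ?hd_pos.
have Hu : u \in [set y | addr y == addr u] by rewrite inE.
have Hw' : w \notin [set y | addr y == addr u] by rewrite inE.
rewrite (cut_lemma e_sym conn HwA HA Hu Hw').
by rewrite L1 ?hd_addr ?hd_pos.
Qed.

Lemma L2' u w : leaf u -> ~~ ((addr w == addr u) && (pos w != ord0)) ->
  D w u = D w (hd u) + ham ord0 (pos u).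
Proof.
move=> Hl Hw.
case: (boolP (addr w == addr u)) => Ha.
  move: Hw; rewrite Ha /= negbK => /eqP Hp.
  have -> : w = hd u by apply: ccc_inj; rewrite ?hd_addr ?hd_pos ?(eqP Ha).
  by rewrite Dself L1 ?hd_addr ?hd_pos.
by rewrite Dsym L2 // Dsym addnC ham_sym.
Qed.


Lemma prefix_rcons_inv (t a : seq 'I_8) q : prefix t (rcons a q) -> prefix t a \/ t = rcons a q.
Proof.
move=> /prefixP [r Er]; case/lastP: r Er => [|r' q'] Er.
  by right; rewrite cats0 in Er.
left; rewrite -rcons_cat in Er; case: (rcons_inj Er) => -> _; exact: prefix_prefix.
Qed.

Lemma edge_cross t x y : e x y -> ~~ prefix t (addr x) -> prefix t (addr y) ->
  [/\ addr y = t, pos y = ord0 & rcons (addr x) (pos x) = t].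
Proof.
move=> /adjE [[H1 H2]|[H1 H2]|[H1 H2]] Hx Hy.
- by move: Hx; rewrite H1 Hy.
- move: Hy; rewrite H1 => /prefix_rcons_inv [Hp|Ht]; first by move: Hx; rewrite Hp.
  by rewrite H2 Ht.
- by move: Hx; rewrite H1 -cats1 (prefix_catl _ Hy).
Qed.

Lemma cutD (A : {set V}) v h u : u \in A -> (forall x y, x \in A -> y \notin A -> e x y -> x = u) ->
  v \in A -> h \notin A -> D v h = D v u + D u h.
Proof. move=> H1 H2 H3 H4; exact: (cut_lemma e_sym conn H1 H2 H3 H4). Qed.

Lemma ex_leaf_below t : valid t -> t != [::] -> size t <= n.-1 ->
  exists h : V, [/\ leaf h, pos h = ord0 & prefix t (addr h)].
Proof.
move=> Hv Hne Hs.
pose c := t ++ nseq (n.-1 - size t) i1.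
have Hcs : size c = n.-1 by rewrite /c size_cat size_nseq subnKC.
have Hcn : size c < n by rewrite Hcs; case: n hn.
have Hcv : valid c.
  move: Hv Hne; rewrite /c /valid; case: t {Hs c Hcs Hcn} => [//|x t] /= Ht _.
  by rewrite all_cat Ht all_nseq i1_neq0 orbT.
have [h [H1 H2]] := exV ord0 Hcn Hcv.
by exists h; split => //; rewrite /leaf ?H1 ?Hcs // /c prefix_prefix.
Qed.

Lemma prefix_head (x : 'I_8) t c : prefix (x :: t) c -> head ord0 c = x.
Proof. by case: c => [|y c] //= /andP [/eqP -> _]. Qed.

Lemma ex_leaf_away x : exists h : V, [/\ leaf h, pos h = ord0 & head ord0 (addr h) != x].
Proof.
pose a : 'I_8 := if x == ord0 then i1 else ord0.
pose c := a :: nseq (n - 2) i1.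
have Hcs : size c = n.-1 by rewrite /c /= size_nseq; move: hn; clear; lia.
have Hcn : size c < n by rewrite Hcs; case: n hn.
have Hcv : valid c by rewrite /valid /c /= all_nseq i1_neq0 orbT.
have [h [H1 H2]] := exV ord0 Hcn Hcv.
exists h; split => //; first by rewrite /leaf H1 Hcs.
by rewrite H1 /= /a; case: (x =P ord0) => [->|/eqP]; rewrite // eq_sym.
Qed.

Lemma between u v : ~~ ((size (addr u) == n.-1) && (pos u != ord0)) ->
  exists h : V, [/\ leaf h, pos h = ord0 & D v h = D v u + D u h].
Proof.
move=> Hu.
case: (boolP (size (addr u) == n.-1)) => Hl.
  move: Hu; rewrite Hl /= negbK => /eqP Hp.
  by exists u; split => //; rewrite Dself addn0.
have Hsz : size (addr u) < n.-1.
  by rewrite ltn_neqAle Hl /= -ltnS prednK ?addr_size //; case: n hn.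
set s := addr u in Hu Hl Hsz *.
case: (boolP ((s == [::]) || (pos u != ord0))) => Hsp.
  pose t := rcons s (pos u).
  have Htv : valid t.
    apply: valid_rcons'; first exact: addr_valid.
    by case/orP: Hsp => [/eqP ->|->]; [left|right].
  have Htne : t != [::] by rewrite /t; case: (s).
  have Hts : size t <= n.-1 by rewrite /t size_rcons.
  have Hut : ~~ prefix t s.
    by apply/negP => /size_prefix; rewrite /t size_rcons ltnn.
  case: (boolP (prefix t (addr v))) => Hv.
    have [h [H1 H2 H3]] := ex_leaf_away (head ord0 t).
    exists h; split => //.
    apply: (cutD (A := [set y | prefix t (addr y)] :|: [set u])).
    - by rewrite !inE eqxx orbT.
    - move=> x y; rewrite !inE => /orP [Hx|/eqP ->] // /norP [Hy Hyu] exy.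
      have [_ _ Ey] := edge_cross (e_flip exy) Hy Hx.
      case: (rcons_inj Ey) => E1 E2.
      by move: Hyu; rewrite (ccc_inj E1 E2) eqxx.
    - by rewrite !inE Hv.
    - rewrite !inE negb_or; apply/andP; split.
        apply/negP; move: H3; rewrite /t; case: (s) => [|z s'] /=.
          by move=> H /prefix_head E; rewrite E eqxx in H.
        by move=> H /prefix_head E; rewrite E eqxx in H.
      apply/negP => /eqP Ehu; move: H1 Hl; rewrite /leaf Ehu => ->.
      by [].
  have [h [H1 H2 H3]] := ex_leaf_below Htv Htne Hts.
  exists h; split => //.
  apply: (cutD (A := [set y | ~~ prefix t (addr y)])).
  - by rewrite inE.
  - move=> x y; rewrite !inE negbK => Hx Hy exy.
    have [_ _ Ex] := edge_cross exy Hx Hy.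
    case: (rcons_inj Ex) => E1 E2.
    exact: ccc_inj E1 E2.
  - by rewrite inE.
  - by rewrite inE negbK.
move: Hsp; rewrite negb_or negbK => /andP [Hs0 /eqP Hp0].
have Hsv : valid s by apply: addr_valid.
have Hss : size s <= n.-1 by apply: ltnW.
case: (boolP (prefix s (addr v))) => Hv.
  have [h [H1 H2 H3]] := ex_leaf_away (head ord0 s).
  exists h; split => //.
  apply: (cutD (A := [set y | prefix s (addr y)])).
  - by rewrite inE prefix_refl.
  - move=> x y; rewrite !inE => Hx Hy exy.
    have [E1 E2 _] := edge_cross (e_flip exy) Hy Hx.
    by apply: ccc_inj; rewrite ?E1 ?E2 ?Hp0.
  - by rewrite inE.
  - rewrite inE; apply/negP; move: H3 Hs0; case: (s) => [|z s'] //= H _.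
    by move=> /prefix_head E; rewrite E eqxx in H.
have [h [H1 H2 H3]] := ex_leaf_below Hsv Hs0 Hss.
exists h; split => //.
apply: (cutD (A := [set y | ~~ prefix s (addr y)] :|: [set u])).
- by rewrite !inE eqxx orbT.
- move=> x y; rewrite !inE => /orP [Hx|/eqP ->] // /norP [Hy Hyu] exy.
  rewrite negbK in Hy.
  have [E1 E2 _] := edge_cross exy Hx Hy.
  by move: Hyu; rewrite (@ccc_inj _ y u) ?eqxx // E2.
- by rewrite !inE Hv.
- rewrite !inE H3 /=; apply/negP => /eqP Ehu; move: H1 Hl; rewrite /leaf Ehu => ->.
  by [].
Qed.

End CCCgraph.



Section Main.
Variable n : nat.
Hypothesis hn : 1 < n.

Local Notation V := (CCC n).
Local Notation e := (@ccc_adj n).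
Local Notation addr := (@ccc_addr n).
Local Notation pos := (@ccc_pos n).
Local Notation D := (dist e).

Definition S3 := [:: i1; i3; i4].
Definition Iset := ('I_8 * (n - 2).-tuple 'I_7)%type.
Definition laddr (i : Iset) : seq 'I_8 := i.1 :: map (lift ord0) i.2.

Lemma laddr_size i : size (laddr i) = n.-1.
Proof. rewrite /laddr /= size_map size_tuple; move: hn; clear; lia. Qed.

Lemma laddr_lt i : size (laddr i) < n.
Proof. rewrite laddr_size; move: hn; clear; lia. Qed.

Lemma laddr_valid i : valid (laddr i).
Proof. rewrite /valid /laddr /= all_map; apply/allP => y _; have := neq_lift ord0 y; by rewrite eq_sym. Qed.

Lemma laddr_inj : injective laddr.
Proof.
move=> [a t] [b t']; rewrite /laddr /= => [[-> Et]].
by congr pair; apply: val_inj; apply: (inj_map lift_inj Et).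
Qed.

Lemma laddr_surj c : valid c -> size c = n.-1 -> exists i, laddr i = c.
Proof.
case: c => [|x t]; first by move=> _ /= Hs; exfalso; move: hn Hs; clear; lia.
rewrite /valid /= => Ht Hs.
pose t' := map (fun y => odflt ord0 (unlift ord0 y)) t.
have Ht' : size t' == n - 2 by rewrite size_map; apply/eqP; move: hn Hs; clear; lia.
exists (x, Tuple Ht'); rewrite /laddr /=; congr cons.
rewrite /t' -map_comp map_id_in // => y Hy /=.
have Hy0 : ord0 != y by rewrite eq_sym; apply: (allP Ht).
by case: (unlift_some Hy0) => k -> ->.
Qed.

Definition lv (i : Iset) (p : 'I_8) : V := mkv (laddr_lt i) (laddr_valid i) p.

Definition g0 (ij : Iset * 'I_3) : V := lv ij.1 (nth ord0 S3 (nat_of_ord ij.2)).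
Definition Z0 : {set V} := g0 @: [set: Iset * 'I_3].

Lemma card_Z0 : #|Z0| = 24 * 7 ^ (n - 2).
Proof.
rewrite card_imset.
  rewrite cardsT card_prod card_prod card_tuple !card_ord; move: (7 ^ (n - 2)) => x; lia.
move=> [i j] [i' j'] /= E.
have Ea : laddr i = laddr i' by move: (f_equal (@ccc_addr n) E).

have Ep : nth ord0 S3 j = nth ord0 S3 j' by move: (f_equal (@ccc_pos n) E).
rewrite (laddr_inj Ea); congr pair; apply: val_inj => /=.
apply/eqP; rewrite -(@nth_uniq _ ord0 S3) ?Ep //; by case: j Ep => /= ? ?; case: j' => /= ? ?.
Qed.


Lemma memZ0 (z : V) : leaf z -> pos z \in S3 -> z \in Z0.
Proof.
move=> /eqP Hl Hp.
have [i Hi] := laddr_surj (addr_valid z) Hl.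
have Hj : index (pos z) S3 < 3 by rewrite -index_mem in Hp.
apply/imsetP; exists (i, Ordinal Hj); first by [].
apply: ccc_inj; first by rewrite /g0 /lv mkv_addr Hi.
by rewrite /g0 /lv mkv_pos /= nth_index.
Qed.

Lemma exZ (c : seq 'I_8) p : size c = n.-1 -> valid c -> p \in S3 ->
  exists z : V, [/\ addr z = c, pos z = p & z \in Z0].
Proof.
move=> Hs Hv Hp.
have Hc : size c < n by rewrite Hs; move: hn; clear; lia.
have [z [H1 H2]] := exV p Hc Hv.
by exists z; split => //; apply: memZ0; rewrite /leaf ?H1 ?H2 ?Hs.
Qed.

Definition LN (u : V) := (size (addr u) == n.-1) && (pos u != ord0).

Lemma hd_eq (u v : V) : addr u = addr v -> hd u = hd v.
Proof. by move=> H; apply: ccc_inj; rewrite ?hd_addr ?hd_pos. Qed.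

Lemma caseB (u v : V) mu : LN u -> ~~ ((addr v == addr u) && (pos v != ord0)) ->
  (forall z, z \in Z0 -> ((D u z)%:Z - (D v z)%:Z = mu)%R) -> False.
Proof.
move=> /andP [Hl Ha] Hv Hmu.
have Hlu : leaf u by [].
pose K := D v (hd u).
have Hx : forall x, x \in S3 -> ((ham (pos u) x)%:Z - (K + ham ord0 x)%:Z = mu)%R.
  move=> x Hx.
  have [z [Hz1 Hz2 Hz3]] := exZ (eqP Hl) (addr_valid u) Hx.
  have Hlz : leaf z by rewrite /leaf Hz1.
  rewrite -(Hmu z Hz3) (L1 hn (esym Hz1) Hlu) Hz2 (L2' hn Hlz) ?Hz1 // Hz2.
  by rewrite (hd_eq Hz1).
have [h [Hh1 Hh2 Hh3]] := ex_leaf_away hn (head ord0 (addr u)).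
have [z [Hz1 Hz2 Hz3]] := exZ (p := i1) (eqP Hh1) (addr_valid h) (isT : i1 \in S3).
have Hzu : addr z != addr u.
  apply/negP => /eqP E; move: Hh3; rewrite -Hz1 E eqxx //.
have E1 := L2 hn Hlu Hzu.
have E2 := Dtri hn v (hd u) z.
have E3 := Hmu z Hz3.
have Hx1 := Hx i1 isT.
have Hx3 := Hx i3 isT.
have Hx4 := Hx i4 isT.
rewrite E1 in E3.
move: Ha => /eqP Ha; apply: Ha; apply: F6; move: E2 E3 Hx1 Hx3 Hx4; rewrite /K; lia.
Qed.


Lemma caseA (u v : V) mu : LN u -> addr v = addr u -> pos v != ord0 ->
  (forall z, z \in Z0 -> ((D u z)%:Z - (D v z)%:Z = mu)%R) -> u = v.
Proof.
move=> /andP [Hl Ha] Hav Hb Hmu.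
have Hlu : leaf u by [].
have Hlv : leaf v by rewrite /leaf Hav.
have Hx : forall x, x \in S3 -> ((ham (pos u) x)%:Z - (ham (pos v) x)%:Z = mu)%R.
  move=> x Hx.
  have [z [Hz1 Hz2 Hz3]] := exZ (eqP Hl) (addr_valid u) Hx.
  by rewrite -(Hmu z Hz3) (L1 hn (esym Hz1) Hlu) (L1 hn (etrans Hav (esym Hz1)) Hlv) Hz2.
have [h [Hh1 Hh2 Hh3]] := ex_leaf_away hn (head ord0 (addr u)).
have [z [Hz1 Hz2 Hz3]] := exZ (p := i1) (eqP Hh1) (addr_valid h) (isT : i1 \in S3).
have Hzu : addr z != addr u.
  apply/negP => /eqP E; move: Hh3; rewrite -Hz1 E eqxx //.
have Hzv : addr z != addr v by rewrite Hav.
have E1 := L2 hn Hlu Hzu.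
have E2 := L2 hn Hlv Hzv.
have E3 := Hmu z Hz3.
rewrite E1 E2 (hd_eq Hav) in E3.
have Hx1 := Hx i1 isT.
have Hx3 := Hx i3 isT.
have Hx4 := Hx i4 isT.
apply: ccc_inj; first by rewrite Hav.
apply: F5; move: E3 Hx1 Hx3 Hx4; lia.
Qed.

Lemma caseC (u v : V) mu : ~~ LN u -> ~~ LN v ->
  (forall z, z \in Z0 -> ((D u z)%:Z - (D v z)%:Z = mu)%R) -> u = v.
Proof.
move=> Hu Hv Hmu.
have Hnot : forall (w z : V), leaf z -> ~~ LN w -> ~~ ((addr w == addr z) && (pos w != ord0)).
  move=> w z Hz; apply: contra => /andP [/eqP Hw Hpw].
  by rewrite /LN Hw (eqP Hz) eqxx.
have Hd : forall h : V, leaf h -> pos h = ord0 -> ((D u h)%:Z - (D v h)%:Z = mu)%R.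
  move=> h Hh Hp.
  have [z [Hz1 Hz2 Hz3]] := exZ (p := i1) (eqP Hh) (addr_valid h) (isT : i1 \in S3).
  have Hlz : leaf z by rewrite /leaf Hz1.
  have Hhz : hd z = h by apply: ccc_inj; rewrite ?hd_addr ?hd_pos.
  have E := Hmu z Hz3.
  rewrite (L2' hn Hlz (Hnot u z Hlz Hu)) (L2' hn Hlz (Hnot v z Hlz Hv)) Hhz in E.
  move: E; lia.
have [h [Hh1 Hh2 Hh3]] := between hn v Hu.
have [h' [Hh1' Hh2' Hh3']] := between hn u Hv.
have E1 := Hd h Hh1 Hh2.
have E2 := Hd h' Hh1' Hh2'.
have E3 := Dsym hn u v.
apply: (D0 hn); move: E1 E2 E3 Hh3 Hh3'; lia.
Qed.

Lemma upper : doubly_resolving e Z0.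
Proof.
move=> u v Huv [mu Hmu].
case: (boolP (LN u)) => Hu; case: (boolP (LN v)) => Hv.
- case: (boolP ((addr v == addr u) && (pos v != ord0))) => H.
    case/andP: H => /eqP H1 H2.
    by move: Huv; rewrite (caseA Hu H1 H2 Hmu) eqxx.
  exact: (caseB Hu H Hmu).
- case: (boolP ((addr v == addr u) && (pos v != ord0))) => H.
    case/andP: H => /eqP H1 H2.
    by move: Hv; rewrite /LN H1 H2 andbT; case/andP: Hu => ->.
  exact: (caseB Hu H Hmu).
- case: (boolP ((addr u == addr v) && (pos u != ord0))) => H.
    case/andP: H => /eqP H1 H2.
    by move: Hu; rewrite /LN H1 H2 andbT; case/andP: Hv => ->.
  apply: (caseB Hv H (mu := (- mu)%R)) => z Hz.
  rewrite -(Hmu z Hz); lia.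
- by move: Huv; rewrite (caseC Hu Hv Hmu) eqxx.
Qed.


Definition Zc (Z : {set V}) (i : Iset) := [set z in Z | (addr z == laddr i) && (pos z != ord0)].

Lemma Zc3 Z i : doubly_resolving e Z -> 3 <= #|Zc Z i|.
Proof.
move=> HZ; rewrite leqNgt; apply/negP => Hlt.
set l := enum (Zc Z i).
have Hsz : size l <= 2 by rewrite -cardE -ltnS.
pose d0 := lv i ord0.
pose x1 := pos (nth d0 l 0).
pose x2 := pos (nth d0 l 1).
have [a [b [Hab [E1 E2]]]] := F4 x1 x2.
have Hla : leaf (lv i a) by rewrite /leaf mkv_addr laddr_size.
have Hlb : leaf (lv i b) by rewrite /leaf mkv_addr laddr_size.
apply: (HZ (lv i a) (lv i b)).
  by apply/negP => /eqP E; move: (f_equal (@ccc_pos n) E); rewrite !mkv_pos => /eqP; apply/negP.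
exists ((ham a ord0)%:Z - (ham b ord0)%:Z)%R => z Hz.
case: (boolP ((addr z == laddr i) && (pos z != ord0))) => Hzc.
  have Hzl : z \in l by rewrite mem_enum inE Hz Hzc.
  have Hk : index z l < 2 by apply: leq_trans Hsz; rewrite index_mem.
  have Hpz : pos z = x1 \/ pos z = x2.
    rewrite /x1 /x2 -(nth_index d0 Hzl).
    by case: (index z l) Hk => [|[|k]] //; [left|right].
  case/andP: Hzc => /eqP Ha _.
  rewrite (L1 hn (u := lv i a) (v := z)) ?mkv_addr ?Ha // (L1 hn (u := lv i b) (v := z)) ?mkv_addr ?Ha //.
  rewrite !mkv_pos.
  by case: Hpz => ->; [move: E1|move: E2]; lia.
have Hna : ~~ ((addr z == addr (lv i a)) && (pos z != ord0)) by rewrite mkv_addr.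
have Hnb : ~~ ((addr z == addr (lv i b)) && (pos z != ord0)) by rewrite mkv_addr.
rewrite (Dsym hn (lv i a)) (Dsym hn (lv i b)) (L2' hn Hla Hna) (L2' hn Hlb Hnb).
rewrite (@hd_eq (lv i a) (lv i b)) ?mkv_addr // !mkv_pos (ham_sym ord0 a) (ham_sym ord0 b).
lia.
Qed.

Lemma lower Z : doubly_resolving e Z -> 24 * 7 ^ (n - 2) <= #|Z|.
Proof.
move=> HZ.
pose gZ (ij : Iset * 'I_3) : V := nth (lv ij.1 ord0) (enum (Zc Z ij.1)) ij.2.
have Hmem : forall ij, gZ ij \in Zc Z ij.1.
  move=> [i j]; rewrite /gZ /= -mem_enum; apply: mem_nth.
  rewrite -cardE; apply: leq_trans (Zc3 i HZ); exact: ltn_ord.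
have Hinj : injective gZ.
  move=> [i j] [i' j'] E.
  have := Hmem (i, j); have := Hmem (i', j'); rewrite !inE /= -E.
  case/andP => _ /andP [/eqP Ha' _]; case/andP => _ /andP [/eqP Ha _].
  have Ei : i = i' by apply: laddr_inj; rewrite -Ha -Ha'.
  subst i'; congr pair; apply: val_inj; apply/eqP.
  move: E; rewrite /gZ /= => /eqP.
  rewrite nth_uniq ?enum_uniq // -cardE; apply: leq_trans (Zc3 i HZ); exact: ltn_ord.
rewrite -card_Z0 /Z0 card_imset; last first.
  move=> [i j] [i' j'] /= E.
  have Ea : laddr i = laddr i' by move: (f_equal (@ccc_addr n) E).
  have Ep : nth ord0 S3 j = nth ord0 S3 j' by move: (f_equal (@ccc_pos n) E).
  rewrite (laddr_inj Ea); congr pair; apply: val_inj => /=.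
  apply/eqP; rewrite -(@nth_uniq _ ord0 S3) ?Ep //; by case: j Ep => /= ? ?; case: j' => /= ? ?.
rewrite -(card_imset _ Hinj); apply: subset_leq_card.
apply/subsetP => z /imsetP [ij _ ->].
by have := Hmem ij; rewrite inE => /andP [].
Qed.

End Main.

Theorem theorem1 (n : nat) (hn : 2 <= n) :
  psi_is (@ccc_adj n) (24 * 7 ^ (n - 2)).
Proof.
split.
  by exists (Z0 hn); split; [exact: upper | exact: card_Z0].
by move=> Z HZ; apply: lower hn Z HZ.
Qed.
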